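(* Let $m\geq1$ and let $\{\Lambda_i\}_{i\geq1}$ be an infinite collection of proper lattices in $\mathbb{Z}^m$. Put $\mathcal{M}_\mathscr{B}=\bigcup_{i\geq1}\Lambda_i$, $\mathcal{F}_\mathscr{B}=\mathbb{Z}^m\setminus\mathcal{M}_\mathscr{B}$, $\eta=\mathbb{1}_{\mathcal{F}_\mathscr{B}}\in\{0,1\}^{\mathbb{Z}^m}$ and let $X_\eta$ be its orbit closure. Consider: (a) $(X_\eta,(S_{\mathbf{n}})_{\mathbf{n}\in\mathbb{Z}^m})$ is proximal; (b) $\mathbf{0}\in X_\eta$, where $\mathbf{0}_{\mathbf{n}}=0$ for all $\mathbf{n}$; (c) for any $k\geq1$ and any lattices $\widetilde\Lambda_1,\dots,\widetilde\Lambda_k$ in $\mathbb{Z}^m$ with $\bigcup_{j=1}^k\widetilde\Lambda_j\neq\mathbb{Z}^m$, we have $\mathcal{M}_\mathscr{B}\not\subseteq\bigcup_{j=1}^k\widetilde\Lambda_j$; (d) $\{\Lambda_i\}_{i\geq1}$ contains an infinite pairwise coprime subset; (e) for any $\mathbf{n}\in\mathbb{Z}^m$ and any lattice $\Lambda\subseteq\mathbb{Z}^m$, $\mathbf{n}+\Lambda\not\subseteq\mathcal{F}_\mathscr{B}$; (f) $d^*(\mathcal{M}_\mathscr{B})=1$. Then (d) implies (a), and (a), (b), (c), (e), (f) are pairwise equivalent.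
   Context: A lattice in $\mathbb{Z}^m$ is a subgroup of finite index. The shift is $(S_{\mathbf{n}}x)_{\mathbf{g}}=x_{\mathbf{g}+\mathbf{n}}$ on $\{0,1\}^{\mathbb{Z}^m}$ with the product topology; $X_\eta$ is the closure of the orbit of $\eta$. A system is proximal if every pair of its points $(x,y)$ satisfies $\liminf_{\mathbf{n}\to\infty}D(S_{\mathbf{n}}x,S_{\mathbf{n}}y)=0$ for a compatible metric $D$. Proper subgroups $\Lambda,\Lambda'$ are coprime if $\Lambda+\Lambda'=\mathbb{Z}^m$. Upper Banach density: $d^*(A)=\sup\{\limsup_n |A\cap F_n|/|F_n|\}$ over all Følner sequences $(F_n)$ in $\mathbb{Z}^m$ (finite sets with $|(F_n+g)\cap F_n|/|F_n|\to1$ for every $g$). *)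

(* Defs.v *)
From Stdlib Require Import Reals ClassicalEpsilon.
From HB Require Import structures.
From mathcomp Require Import all_boot all_order all_algebra.
Set Implicit Arguments. Unset Strict Implicit. Unset Printing Implicit Defensive.
Import GRing.Theory.
Local Open Scope ring_scope.

Notation Zm m := ('rV[int]_m).

Definition pbool (P : Prop) : bool :=
  if excluded_middle_informative P then true else false.

Definition is_subgroup m (L : Zm m -> Prop) : Prop :=
  L 0 /\ forall x y, L x -> L y -> L (x - y).

Definition is_lattice m (L : Zm m -> Prop) : Prop :=
  is_subgroup L /\
  exists s : seq (Zm m), forall x, exists2 r, r \in s & L (x - r).

Definition proper_lattice m (L : Zm m -> Prop) : Prop :=
  is_lattice L /\ exists x, ~ L x.

Definition coprime_lat m (L L' : Zm m -> Prop) : Prop :=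
  forall x, exists a b, L a /\ L' b /\ x = a + b.

Definition shift m (n : Zm m) (x : Zm m -> bool) : Zm m -> bool :=
  fun g => x (g + n).

(* x lies in the closure (product topology) of the orbit of eta:
   every cylinder neighbourhood of x meets the orbit *)
Definition orbit_closure m (eta : Zm m -> bool) (x : Zm m -> bool) : Prop :=
  forall W : seq (Zm m), exists n, forall g, g \in W -> x g = shift n eta g.

(* liminf_{n -> oo} D(S_n x, S_n y) = 0 for a compatible metric D, i.e. for
   every basic neighbourhood of the diagonal (agreement on a finite window W)
   and every finite set K, some n outside K has S_n x, S_n y agreeing on W *)
Definition proximal_pair m (x y : Zm m -> bool) : Prop :=
  forall W K : seq (Zm m), exists n, n \notin K /\
    forall g, g \in W -> shift n x g = shift n y g.

Definition proximal m (X : (Zm m -> bool) -> Prop) : Prop :=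
  forall x y, X x -> X y -> proximal_pair x y.

(* Folner sequences of finite (nonempty) sets, represented by duplicate-free
   sequences: |(F_n + g) :&: F_n| / |F_n| -> 1 for every g *)
Definition Folner m (F : nat -> seq (Zm m)) : Prop :=
  (forall n, uniq (F n) /\ (0 < size (F n))%N) /\
  forall g : Zm m,
    Un_cv (fun n => Rdiv (INR (count (fun x => (x - g) \in F n) (F n)))
                         (INR (size (F n)))) (IZR 1).

Definition density_ratio m (A : Zm m -> Prop) (F : nat -> seq (Zm m)) (n : nat) : R :=
  Rdiv (INR (count (fun x => pbool (A x)) (F n))) (INR (size (F n))).

Definition is_limsup (u : nat -> R) (l : R) : Prop :=
  (forall eps, Rlt (IZR 0) eps -> exists N, forall n, (N <= n)%N -> Rlt (u n) (Rplus l eps)) /\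
  (forall eps, Rlt (IZR 0) eps -> forall N, exists n, (N <= n)%N /\ Rlt (Rminus l eps) (u n)).

Definition upper_banach_density m (A : Zm m -> Prop) (d : R) : Prop :=
  is_lub (fun l => exists F, Folner F /\ is_limsup (density_ratio A F) l) d.

(* Main.v *)
Require Import Defs.
From Stdlib Require Import Reals ClassicalEpsilon.
From HB Require Import structures.
From mathcomp Require Import all_boot all_order all_algebra.
Import GRing.Theory.
Local Open Scope ring_scope.
From Stdlib Require Import Lra FunctionalExtensionality.
From mathcomp Require Import zify.
Set Implicit Arguments. Unset Strict Implicit. Unset Printing Implicit Defensive.

Local Open Scope R_scope.

Lemma INR_leq (a b : nat) : (a <= b)%N -> INR a <= INR b.
Proof. by move/leP; apply: le_INR. Qed.
Lemma INR_ltn (a b : nat) : (a < b)%N -> INR a < INR b.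
Proof. by move/ltP; apply: lt_INR. Qed.
Lemma INR_mul (a b : nat) : INR (a * b)%N = INR a * INR b.
Proof. exact: mult_INR. Qed.
Lemma INR_add (a b : nat) : INR (a + b)%N = INR a + INR b.
Proof. exact: plus_INR. Qed.
Lemma INR_sub (a b : nat) : (b <= a)%N -> INR (a - b)%N = INR a - INR b.
Proof. by move/leP; apply: minus_INR. Qed.

Lemma ratio_conv (c S : nat -> nat) (C : nat) : (forall k, (0 < S k)%N) ->
  (forall k, (c k <= S k)%N) -> (forall k, (k.+1 * (S k - c k) <= C * S k)%N) ->
  Un_cv (fun k => INR (c k) / INR (S k)) 1.
Proof.
move=> hS hc hb eps heps.
have [N hN] := INR_unbounded (INR C / eps).
exists N => k /leP hk.
have hkN : INR N <= INR k by apply: INR_leq.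
have hs : 0 < INR (S k) by apply: (INR_ltn (hS k)).
have hcs : INR (c k) <= INR (S k) by apply: INR_leq.
have hb' := INR_leq (hb k); rewrite !INR_mul INR_sub // S_INR in hb'.
have hC : INR C < eps * (INR k + 1).
  have : INR C / eps < INR k + 1 by lra.
  move=> h; have := Rmult_lt_compat_r eps _ _ heps h.
  by rewrite /Rdiv Rmult_assoc Rinv_l; lra.
have h1 : INR (S k) - INR (c k) < eps * INR (S k).
  have hk1 : 0 < INR k + 1 by have := pos_INR k; lra.
  apply: (Rmult_lt_reg_l (INR k + 1)) => //; nra.
rewrite /Rdist Rabs_left1.
  have -> : - (INR (c k) / INR (S k) - 1) = (INR (S k) - INR (c k)) / INR (S k) by field; lra.
  apply: (Rmult_lt_reg_r (INR (S k))) => //.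
  by rewrite /Rdiv Rmult_assoc Rinv_l; lra.
have : INR (c k) / INR (S k) <= 1.
  by apply: (Rmult_le_reg_r (INR (S k))) => //; rewrite /Rdiv Rmult_assoc Rinv_l; lra.
lra.
Qed.

Lemma cv_to_nat (c S N : nat) : (0 < S)%N -> (0 < N)%N -> (c <= S)%N ->
  Rdist (INR c / INR S) 1 < / (2 * INR N) -> (2 * N * (S - c) < S)%N.
Proof.
move=> hS hN hc h.
have hS' : 0 < INR S by apply: (@INR_ltn 0).
have hN' : 0 < INR N by apply: (@INR_ltn 0).
have hc' := INR_leq hc.
have h1 : INR c / INR S <= 1.
  by apply: (Rmult_le_reg_r (INR S)) => //; rewrite /Rdiv Rmult_assoc Rinv_l; lra.
rewrite /Rdist Rabs_left1 in h; last by lra.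
have h2 : 2 * INR N * (INR S - INR c) < INR S.
  have e : INR S - INR c = INR S * (- (INR c / INR S - 1)) by field; lra.
  rewrite e.
  have h3 : 2 * INR N * (- (INR c / INR S - 1)) < 1.
    have := Rmult_lt_compat_l (2 * INR N) _ _ ltac:(lra) h.
    by rewrite Rinv_r; lra.
  nra.
apply/ltP; apply: INR_lt; rewrite !mult_INR minus_INR; last by apply/leP.
by rewrite /= in h2 *; lra.
Qed.

Lemma dens_bound (cm S N : nat) : (0 < S)%N -> (0 < N)%N ->
  (2 * N * cm + S <= 2 * N * S)%N -> INR cm / INR S <= 1 - / (2 * INR N).
Proof.
move=> hS hN h.
have hS' : 0 < INR S by apply: (@INR_ltn 0).
have hN' : 0 < INR N by apply: (@INR_ltn 0).
have := INR_leq h; rewrite !INR_add !INR_mul /= => h'.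
apply: (Rmult_le_reg_r (2 * INR N * INR S)); first by nra.
have -> : INR cm / INR S * (2 * INR N * INR S) = 2 * INR N * INR cm by field; lra.
have -> : (1 - / (2 * INR N)) * (2 * INR N * INR S) = 2 * INR N * INR S - INR S by field; lra.
lra.
Qed.

Local Close Scope R_scope.
From mathcomp Require Import ring.

Lemma sg0 m (L : Zm m -> Prop) : is_subgroup L -> L 0.
Proof. by case. Qed.
Lemma sgN m (L : Zm m -> Prop) x : is_subgroup L -> L x -> L (- x).
Proof. by case=> h0 hB hx; rewrite -sub0r; apply: hB. Qed.
Lemma sgB m (L : Zm m -> Prop) x y : is_subgroup L -> L x -> L y -> L (x - y).
Proof. by case=> h0 hB; apply: hB. Qed.
Lemma sgD m (L : Zm m -> Prop) x y : is_subgroup L -> L x -> L y -> L (x + y).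
Proof. by move=> hL hx hy; rewrite -[y]opprK; apply: sgB => //; apply: sgN. Qed.
Lemma sgZ m (L : Zm m -> Prop) x (z : int) : is_subgroup L -> L x -> L (x *~ z).
Proof.
move=> hL hx; have hn : forall n : nat, L (x *~ n).
  elim=> [|n IH]; first by rewrite mulr0z; apply: sg0.
  by rewrite intS mulrzDr mulr1z; apply: sgD.
case: z => n; first exact: hn.
by rewrite NegzE mulrNz; apply: sgN => //; apply: hn.
Qed.

Definition zpick m (P : Zm m -> Prop) : Zm m :=
  match excluded_middle_informative (exists x, P x) with
  | left h => proj1_sig (constructive_indefinite_description _ h)
  | right _ => 0 end.
Lemma zpickP m (P : Zm m -> Prop) : (exists x, P x) -> P (zpick P).
Proof.
rewrite /zpick; case: excluded_middle_informative => // h _.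
exact: proj2_sig (constructive_indefinite_description _ h).
Qed.

Lemma pboolE (P : Prop) : pbool P = true <-> P.
Proof. by rewrite /pbool; case: excluded_middle_informative. Qed.
Lemma pboolF (P : Prop) : pbool P = false <-> ~ P.
Proof. by rewrite /pbool; case: excluded_middle_informative. Qed.

Lemma lat_sub m (L : Zm m -> Prop) : is_lattice L -> is_subgroup L.
Proof. by case. Qed.

Lemma lat_full m : is_lattice (fun _ : Zm m => True).
Proof. by split; [split|exists [:: 0] => x; exists 0; rewrite ?inE]. Qed.

Lemma lat_inter m (L M : Zm m -> Prop) : is_lattice L -> is_lattice M ->
  is_lattice (fun x => L x /\ M x).
Proof.
case=> hL [s hs] [hM [t ht]]; split.
  split; first by split; apply: sg0.
  by move=> x y [? ?] [? ?]; split; apply: sgB.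
exists [seq zpick (fun x => L (x - r) /\ M (x - r')) | r <- s, r' <- t] => x.
have [r rs hr] := hs x; have [r' rt hr'] := ht x.
set y := zpick (fun x => L (x - r) /\ M (x - r')).
have hy : L (y - r) /\ M (y - r') :=
  @zpickP m (fun x => L (x - r) /\ M (x - r')) (ex_intro _ x (conj hr hr')).
exists y; first by apply/allpairsP; exists (r, r').
have e1 : x - y = (x - r) - (y - r) by rewrite opprB addrA subrK.
have e2 : x - y = (x - r') - (y - r') by rewrite opprB addrA subrK.
case: hy => hy1 hy2.
by split; [rewrite e1; apply: sgB | rewrite e2; apply: sgB].
Qed.

Lemma lat_big m k (L : 'I_k -> Zm m -> Prop) : (forall j, is_lattice (L j)) ->
  is_lattice (fun x => forall j, L j x).
Proof.
move=> hL.
have H : forall s : seq 'I_k, is_lattice (fun x => forall j, j \in s -> L j x).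
  elim=> [|j s IH].
    have [h1 h2] := lat_full m; split.
      by split => // *.
    by case: h2 => s0 hs0; exists s0 => x; case: (hs0 x) => r ? _; exists r.
  have := lat_inter (hL j) IH; case=> [[h0 hB] [s0 hs0]]; split.
    split; first by move=> i; rewrite inE => /orP[/eqP->|]; [case: h0| case: h0 => _ h; apply: h].
    move=> x y hx hy; have [] := hB x y.
    - by split; [apply: hx; rewrite inE eqxx | move=> i hi; apply: hx; rewrite inE hi orbT].
    - by split; [apply: hy; rewrite inE eqxx | move=> i hi; apply: hy; rewrite inE hi orbT].
    by move=> h1 h2 i; rewrite inE => /orP[/eqP->//|/h2].
  exists s0 => x; case: (hs0 x) => r rs [h1 h2]; exists r => // i.
  by rewrite inE => /orP[/eqP->//|/h2].
have [[h0 hB] [s hs]] := H (enum 'I_k); split.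
  split; first by move=> j; apply: h0; rewrite mem_enum.
  move=> x y hx hy j; apply: hB; last by rewrite mem_enum.
    by move=> i _; exact: hx.
  by move=> i _; exact: hy.
by exists s => x; case: (hs x) => r rs hr; exists r => // j; apply: hr; rewrite mem_enum.
Qed.

Lemma rep_coset m (L : Zm m -> Prop) (s : seq (Zm m)) c :
  is_subgroup L -> (forall x, exists2 r, r \in s & L (x - r)) ->
  exists2 r, r \in s & L (r - c).
Proof.
move=> hL hs; case: (hs c) => r rs hr; exists r => //.
by rewrite -opprB; apply: sgN.
Qed.

Definition MBd m (Lam : nat -> Zm m -> Prop) (x : Zm m) := exists i, Lam i x.
Definition Ep m (Lam : nat -> Zm m -> Prop) := forall (n : Zm m) (L : Zm m -> Prop),
  is_lattice L -> ~ (forall l, L l -> ~ MBd Lam (n + l)).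

Lemma ind_e m (Lam : nat -> Zm m -> Prop) : (forall i, proper_lattice (Lam i)) ->
  Ep Lam -> forall (W : seq (Zm m)) c L0, is_lattice L0 ->
  exists n L, L0 (n - c) /\ is_lattice L /\ (forall l, L l -> L0 l) /\
    forall l w, L l -> w \in W -> MBd Lam (n + l + w).
Proof.
move=> hLam hE; elim=> [|w W IH] c L0 hL0.
  exists c, L0; split; first by rewrite subrr; apply: sg0; case: hL0.
  by do 2 split => //.
have [n [L [h1 [h2 [h3 h4]]]]] := IH c L0 hL0.
have : exists l0, L l0 /\ MBd Lam (n + w + l0).
  apply: NNPP => hn; apply: (hE (n + w) L h2) => l hl hM; apply: hn; by exists l.
case=> l0 [hl0 [i hi]].
have hLi : is_lattice (Lam i) by case: (hLam i).
exists (n + l0), (fun x => L x /\ Lam i x); split.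
  have -> : n + l0 - c = (n - c) + l0 by rewrite addrAC.
  by apply: sgD => //; [case: hL0 | apply: h3].
split; first exact: lat_inter.
split; first by move=> l [hl _]; apply: h3.
move=> l w' [hl hli]; rewrite inE => /orP[/eqP->|hw].
  exists i; have -> : n + l0 + l + w = (n + w + l0) + l by rewrite -!addrA; congr (_ + _); rewrite addrA [RHS]addrC.
  by apply: sgD => //; case: hLi.
have -> : n + l0 + l + w' = n + (l0 + l) + w' by rewrite addrA.
apply: (h4 (l0 + l) w') => //; apply: sgD => //; by case: h2.
Qed.

Definition etad m (Lam : nat -> Zm m -> Prop) : Zm m -> bool :=
  fun g => pbool (~ MBd Lam g).

Lemma eta_MB m (Lam : nat -> Zm m -> Prop) g : MBd Lam g -> etad Lam g = false.
Proof. by move=> h; apply/pboolF. Qed.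

Lemma e_to_W m (Lam : nat -> Zm m -> Prop) : (forall i, proper_lattice (Lam i)) ->
  Ep Lam -> forall W : seq (Zm m), exists n, forall w, w \in W -> MBd Lam (n + w).
Proof.
move=> hLam hE W; have [n [L [_ [hL [_ h]]]]] := ind_e hLam hE W 0 (@lat_full m).
exists n => w hw; have := h 0 w; rewrite addr0; apply => //.
by apply: sg0; case: hL.
Qed.

Lemma e_to_b m (Lam : nat -> Zm m -> Prop) : (forall i, proper_lattice (Lam i)) ->
  Ep Lam -> orbit_closure (etad Lam) (fun _ => false).
Proof.
move=> hLam hE W; have [n hn] := e_to_W hLam hE W.
exists n => g hg; rewrite /shift eta_MB // addrC; exact: hn.
Qed.

Lemma b_to_e m (Lam : nat -> Zm m -> Prop) :
  orbit_closure (etad Lam) (fun _ => false) -> Ep Lam.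
Proof.
move=> hb n L [hL [s hs]] hF.
have [t ht] := hb [seq - r | r <- s].
have [r rs hr] := hs (t - n).
have := ht (- r); rewrite map_f // /shift => /(_ isT) /esym /pboolF; apply => hM.
apply: (hF _ hr); have -> : n + (t - n - r) = - r + t.
  by rewrite [t - n]addrC addrA addNKr addrC.
exact: hM.
Qed.

Lemma a_to_e m (Lam : nat -> Zm m -> Prop) : (forall i, proper_lattice (Lam i)) ->
  proximal (orbit_closure (etad Lam)) -> Ep Lam.
Proof.
move=> hLam ha n L hL hF.
have hL0 : is_lattice (Lam 0) by case: (hLam 0).
have [hL' [s hs]] := lat_inter hL hL0.
have hx : orbit_closure (etad Lam) (etad Lam).
  by move=> W; exists 0 => g _; rewrite /shift addr0.
have hy : orbit_closure (etad Lam) (shift n (etad Lam)).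
  by move=> W; exists n.
have [t [_ ht]] := ha _ _ hx hy [seq - r | r <- s] [::].
have [r rs [hr1 hr2]] := hs t.
have := ht (- r); rewrite map_f // /shift => /(_ isT).
rewrite eta_MB; last by exists 0; rewrite addrC.
move/esym/pboolF; apply; have := hF (t - r) hr1; by rewrite addrC (addrC (- r)).
Qed.

Ltac zmx := apply/rowP => ?; rewrite ?mxE; ring.

Lemma le_sum_seq (T : eqType) (f : T -> nat) x s : x \in s -> (f x <= \sum_(y <- s) f y)%N.
Proof.
elim: s => // y s IH; rewrite inE big_cons => /orP[/eqP->|/IH h]; first exact: leq_addr.
exact: leq_trans h (leq_addl _ _).
Qed.

Lemma stage m (Lam : nat -> Zm m -> Prop) : (forall i, proper_lattice (Lam i)) ->
  Ep Lam -> forall (W : seq (Zm m)) n0 L0, is_lattice L0 ->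
  forall s : seq (Zm m), exists Ls, is_lattice Ls /\ (forall l, Ls l -> L0 l) /\
    forall r, r \in s -> exists nr, L0 (nr - (n0 + r)) /\
      forall l w, Ls l -> w \in W -> MBd Lam (nr + l + w).
Proof.
move=> hLam hE W n0 L0 hL0; elim=> [|r s [Ls [h1 [h2 h3]]]].
  by exists L0; do 2 split => //.
have [nr [Lr [k1 [k2 [k3 k4]]]]] := ind_e hLam hE W (n0 + r) hL0.
exists (fun x => Ls x /\ Lr x); split; first exact: lat_inter.
split; first by move=> l [? _]; apply: h2.
move=> r'; rewrite inE => /orP[/eqP->|hr'].
  by exists nr; split => // l w [_ hl]; apply: k4.
have [nr' [j1 j2]] := h3 r' hr'; exists nr'; split => // l w [hl _]; exact: j2.
Qed.

Lemma e_to_a m (Lam : nat -> Zm m -> Prop) : (1 <= m)%N -> (forall i, proper_lattice (Lam i)) ->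
  Ep Lam -> proximal (orbit_closure (etad Lam)).
Proof.
move=> hm hLam hE x y hx hy W K.
have [n0 [L0 [_ [hL0 [_ h0]]]]] := ind_e hLam hE W 0 (@lat_full m).
have hL0' := hL0; case: hL0' => hL0s [R0 hR0].
have [Ls [hLs [hLsL0 hst]]] := stage hLam hE W n0 hL0 R0.
case: (hLs) => hLss [Rs hRs].
pose i0 : 'I_m := Ordinal hm.
pose B : nat := (\sum_(k <- K) absz (k ord0 i0) + \sum_(r <- Rs) absz (r ord0 i0)).+1.
pose Mv : Zm m := const_mx (B%:Z).
pose T := [seq Mv - r | r <- Rs].
have [s1 hs1] := hx [seq t + w | t <- T, w <- W].
have [s2 hs2] := hy [seq t + w | t <- T, w <- W].
have [r0 r0R h00] := hR0 (s1 - s2).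
have [nr [hnr1 hnr2]] := hst r0 r0R.
have [r rR hr] := hRs (Mv - (nr - s1)).
exists (Mv - r); split.
  apply/negP => hK.
  have h1 := le_sum_seq (fun k : Zm m => absz (k ord0 i0)) hK.
  have h2 := le_sum_seq (fun k : Zm m => absz (k ord0 i0)) rR.
  have : (Mv - r) ord0 i0 = B%:Z - r ord0 i0 by rewrite !mxE.
  move: h1 h2; rewrite /B /=.
  set u := (Mv - r) ord0 i0; set a := \sum_(k <- K) _; set b := \sum_(k <- Rs) _.
  move=> h1 h2 hu.
  have : (`|u| <= a)%N by [].
  rewrite hu; lia.
move=> w hw; rewrite /shift.
have hA : w + (Mv - r) \in [seq t + w | t <- T, w <- W].
  by rewrite addrC; apply/allpairsP; exists (Mv - r, w); rewrite /= hw (map_f (fun r => Mv - r)).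

rewrite (hs1 _ hA) (hs2 _ hA) /shift.
have hl : Ls (Mv - r - (nr - s1)).
  by have -> : Mv - r - (nr - s1) = Mv - (nr - s1) - r by zmx.
rewrite !eta_MB //.
  have := h0 ((nr - (n0 + r0)) - ((s1 - s2) - r0) + (Mv - r - (nr - s1))) w.
  have -> : n0 + (nr - (n0 + r0) - (s1 - s2 - r0) + (Mv - r - (nr - s1))) + w
    = w + (Mv - r) + s2 by zmx.
  apply => //; apply: sgD => //; last by apply: hLsL0.
  by apply: sgB.
have := hnr2 _ w hl hw.
by have -> : nr + (Mv - r - (nr - s1)) + w = w + (Mv - r) + s1 by zmx.
Qed.


Definition Cp m (Lam : nat -> Zm m -> Prop) := forall (k : nat) (L : 'I_k -> Zm m -> Prop),
  (1 <= k)%N -> (forall j, is_lattice (L j)) -> (exists x, forall j, ~ L j x) ->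
  ~ (forall x, MBd Lam x -> exists j, L j x).

Lemma e_to_c m (Lam : nat -> Zm m -> Prop) : Ep Lam -> Cp Lam.
Proof.
move=> hE k L _ hL [x0 hx0] hcov.
apply: (hE x0 _ (lat_big hL)) => l hl hM.
have [j hj] := hcov _ hM; apply: (hx0 j).
have -> : x0 = x0 + l - l by rewrite addrK.
by apply: sgB => //; case: (hL j).
Qed.

Definition genl m (g : Zm m) (L : Zm m -> Prop) x := exists (z : int) l, L l /\ x = g *~ z + l.

Lemma lat_gen m (g : Zm m) L : is_lattice L -> is_lattice (genl g L).
Proof.
case=> hL [s hs]; split.
  split; first by exists 0, 0; split; [apply: sg0 | rewrite mulr0z addr0].
  move=> x y [z1 [l1 [h1 ->]]] [z2 [l2 [h2 ->]]].
  exists (z1 - z2), (l1 - l2); split; first exact: sgB.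
  by rewrite mulrzBr; zmx.
exists s => x; case: (hs x) => r rs hr; exists r => //.
by exists 0, (x - r); rewrite mulr0z add0r.
Qed.

Lemma c_to_e m (Lam : nat -> Zm m -> Prop) : (forall i, proper_lattice (Lam i)) ->
  Cp Lam -> Ep Lam.
Proof.
move=> hLam hC n L hL hF.
have hL' := hL; case: hL' => hLs [s hs].
have k1 : (1 <= size s)%N by case: (hs 0) => r; case: s {hs} => //.
pose g (j : 'I_(size s)) : Zm m :=
  if pbool (exists y, MBd Lam y /\ L (y - nth 0 s j)) then nth 0 s j else 0.
apply: (hC (size s) (fun j => genl (g j) L) k1).
- by move=> j; apply: lat_gen.
- exists n => j [z [l [hl he]]].
  rewrite /g in he; case: pbool (pboolE (exists y, MBd Lam y /\ L (y - nth 0 s j))) he.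
    case=> /(_ erefl) [y [[i hi] hy]] _ he.
    apply: (hF ((y - nth 0 s j) *~ z - l)).
      by apply: sgB => //; apply: sgZ.
    exists i; have -> : n + ((y - nth 0 s j) *~ z - l) = y *~ z.
      by rewrite he mulrzBl; zmx.
    by apply: sgZ; case: (hLam i) => [[]].
  move=> _ he; apply: (hF (- l)); first exact: sgN.
  exists 0; have -> : n + - l = 0 by rewrite he mul0rz add0r subrr.
  by apply: sg0; case: (hLam 0) => [[]].
- move=> x hx; case: (hs x) => r rs hr.
  have hi : (index r s < size s)%N by rewrite index_mem.
  exists (Ordinal hi); rewrite /g /= nth_index //.
  case: pbool (pboolF (exists y, MBd Lam y /\ L (y - r))) => [_|[h _]].
    by exists 1, (x - r); split => //; rewrite mulr1z addrC subrK.
  by exfalso; apply: h => //; exists x.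
Qed.

Definition Dp m (Lam : nat -> Zm m -> Prop) := exists phi : nat -> nat, injective phi /\
  forall i j, i <> j -> coprime_lat (Lam (phi i)) (Lam (phi j)).

Lemma d_to_e m (Lam : nat -> Zm m -> Prop) : (forall i, proper_lattice (Lam i)) ->
  Dp Lam -> Ep Lam.
Proof.
move=> hLam [phi [_ hcop]] n L hL hF.
have hL' := hL; case: hL' => hLs [s hs].
pose M (i : nat) x := exists a l, Lam (phi i) a /\ L l /\ x = a + l.
pose f (i : 'I_(2 ^ size s).+1) := map_tuple (fun r => pbool (M i r)) (in_tuple s).
have : ~~ injectiveb f.
  apply/negP => /injectiveP /leq_card; rewrite card_ord card_tuple card_bool.
  by rewrite ltnn.
case/injectivePn => i [j hij hf].
have hm : forall r, r \in s -> pbool (M i r) = pbool (M j r).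
  apply/eq_in_map; have := congr1 val hf; exact.
have hij' : (i : nat) <> j by move=> e; move: hij; rewrite (val_inj e) eqxx.
have [a [b [ha [hb en]]]] := hcop _ _ hij' n.
have [r rs hr] := hs b.
have : M j r by exists b, (- (b - r)); do 2 split => //; [apply: sgN | zmx].
move/pboolE; rewrite -hm // => /pboolE [a' [l' [ha' [hl' er]]]].
apply: (hF (- (l' + (b - r)))); first by apply: sgN => //; apply: sgD.
exists (phi i); have -> : n + - (l' + (b - r)) = a + a' by rewrite en er; zmx.
by apply: sgD => //; case: (hLam (phi i)) => [[]].
Qed.

Lemma cardcount (T : finType) (a : pred T) : #|[pred x | a x]| = count a (enum T).
Proof. by rewrite cardE /enum_mem size_filter /enum_mem count_filter; apply: eq_count => x; rewrite !inE andbT. Qed.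

Definition rowf m k (f : {ffun 'I_m -> 'I_k.+1}) : Zm m := \row_i ((f i : nat)%:Z).
Definition Bx m k : seq (Zm m) := map (@rowf m k) (enum {ffun 'I_m -> 'I_k.+1}).

Lemma rowf_inj m k : injective (@rowf m k).
Proof.
move=> f f' e; apply/ffunP => i; apply: val_inj.
by have := congr1 (fun y : Zm m => y ord0 i) e; rewrite !mxE => -[].
Qed.

Lemma Bx_uniq m k : uniq (Bx m k).
Proof. by rewrite map_inj_uniq ?enum_uniq //; apply: rowf_inj. Qed.

Lemma size_Bx m k : size (Bx m k) = (k.+1 ^ m)%N.
Proof. by rewrite size_map -cardT card_ffun !card_ord. Qed.

Definition inbox m k (y : Zm m) := [forall i, (0 <= y ord0 i) && (y ord0 i < (k.+1)%:Z)].

Lemma mem_Bx m k y : (y \in Bx m k) = inbox k y.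
Proof.
apply/idP/idP.
  case/mapP => f _ ->; apply/forallP => i; rewrite mxE; apply/andP; split => //.
  by rewrite ltz_nat.
move/forallP => h.
pose f := [ffun i => (inord (absz (y ord0 i)) : 'I_k.+1)].
have -> : y = rowf f.
  apply/rowP => i; rewrite !mxE ffunE; have /andP[h1 h2] := h i.
  rewrite inordK; first by rewrite gez0_abs.
  by rewrite -ltz_nat gez0_abs.
by apply: map_f; rewrite mem_enum.
Qed.

Lemma le_sum_seq_nat (T : eqType) (f : T -> nat) x s : x \in s -> (f x <= \sum_(y <- s) f y)%N.
Proof.
elim: s => // y s IH; rewrite inE big_cons => /orP[/eqP->|/IH h]; first exact: leq_addr.
exact: leq_trans h (leq_addl _ _).
Qed.
Lemma count_cover (T I : eqType) (a : pred T) (b : I -> pred T) (s : seq I) (F : seq T) :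
  (forall x, x \in F -> a x -> exists2 i, i \in s & b i x) ->
  (count a F <= \sum_(i <- s) count (b i) F)%N.
Proof.
elim: F => [|x F IH] h; first by rewrite big1_seq.
rewrite /= big_split /=; apply: leq_add; last first.
  by apply: IH => y hy; apply: h; rewrite inE hy orbT.
case ha: (a x) => //; have [i hi hb] := h x (mem_head _ _) ha.
by apply: leq_trans (le_sum_seq_nat _ hi); rewrite hb.
Qed.

Lemma card_coord m k (i : 'I_m) (P : pred 'I_k.+1) :
  #|[pred f : {ffun 'I_m -> 'I_k.+1} | P (f i)]| = (#|P| * k.+1 ^ m.-1)%N.
Proof.
pose F := fun j : 'I_m => if j == i then P else predT.
have -> : #|[pred f : {ffun 'I_m -> 'I_k.+1} | P (f i)]| = #|(family F : simpl_pred {ffun 'I_m -> 'I_k.+1})|.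
  apply: eq_card => f; rewrite !inE; apply/idP/familyP.
    by move=> h j; rewrite /F; case: eqP => [->|] //.
  by move/(_ i); rewrite /F eqxx.
rewrite card_family foldrE big_map big_enum /= (bigD1 i) //= /F eqxx.
congr (_ * _)%N; rewrite (eq_bigr (fun=> k.+1)); last by move=> j /negbTE ->; rewrite cardT size_enum_ord.
by rewrite prod_nat_const cardC1 card_ord.
Qed.

Lemma card_bad k (z : int) :
  leq #|[pred a : 'I_k.+1 | ~~ ((0 <= (a : nat)%:Z - z) && ((a : nat)%:Z - z < (k.+1)%:Z))]| (2 * absz z).
Proof.
set A := [pred a : 'I_k.+1 | _].
rewrite cardE -(size_map val) mul2n -addnn.
have -> : (absz z + absz z = size (iota 0 (absz z) ++ iota (k.+1 - absz z) (absz z)))%N.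
  by rewrite size_cat !size_iota.
apply: uniq_leq_size; first by rewrite map_inj_uniq ?enum_uniq //; apply: val_inj.
move=> x /mapP [a]; rewrite mem_enum inE => ha ->.
rewrite mem_cat !mem_iota; case: a ha => n hn /= ha.
lia.
Qed.

Lemma box_count m k (g : Zm m) : (1 <= m)%N ->
  leq (k.+1 * (size (Bx m k) - count (fun x : Zm m => (x - g)%R \in Bx m k) (Bx m k)))%N
    ((\sum_(i <- enum 'I_m) 2 * absz (g ord0 i)) * size (Bx m k))%N.
Proof.
move=> hm.
rewrite {1 2}/Bx count_map size_map.
set E := enum _.
set a := preim _ _.
rewrite -(count_predC a E) addKn.
pose bad (i : 'I_m) (f : {ffun 'I_m -> 'I_k.+1}) :=
  ~~ ((0 <= ((f i : nat)%:Z - g ord0 i)) && (((f i : nat)%:Z - g ord0 i) < (k.+1)%:Z)).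
have h1 : (count (predC a) E <= \sum_(i <- enum 'I_m) count (bad i) E)%N.
  apply: count_cover => f _; rewrite /= /a /= mem_Bx /inbox negb_forall => /existsP [i hi].
  by exists i; rewrite ?mem_enum // /bad; move: hi; rewrite !mxE.
have h2 : forall i, (count (bad i) E <= 2 * absz (g ord0 i) * k.+1 ^ m.-1)%N.
  move=> i; rewrite -cardcount.
  have := card_coord i [pred a : 'I_k.+1 | ~~ ((0 <= (a : nat)%:Z - g ord0 i) && ((a : nat)%:Z - g ord0 i < (k.+1)%:Z))].
  rewrite /bad => ->; rewrite leq_mul2r; apply/orP; right; exact: card_bad.
have h3 : (size (Bx m k) = k.+1 * k.+1 ^ m.-1)%N by rewrite size_Bx -expnS prednK.
rewrite /Bx size_map in h3; rewrite count_predC /E h3 mulnCA leq_mul2l; apply/orP; right.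
apply: leq_trans h1 _; rewrite big_distrl /=; apply: leq_sum => i _; exact: h2.
Qed.

Lemma Folner_box m (t : nat -> Zm m) : (1 <= m)%N ->
  Folner (fun k => map (fun x => x + t k) (Bx m k)).
Proof.
move=> hm; split.
  move=> n; split; first by rewrite map_inj_uniq ?Bx_uniq //; exact: addIr.
  by rewrite size_map size_Bx expn_gt0.
move=> g.
have e : forall k, count (fun x => (x - g) \in map (fun x => x + t k) (Bx m k))
    (map (fun x => x + t k) (Bx m k)) = count (fun x => (x - g) \in Bx m k) (Bx m k).
  move=> k; rewrite count_map; apply: eq_count => x /=.
  have -> : x + t k - g = (x - g) + t k by rewrite addrAC.
  by rewrite (@mem_map _ _ (fun x => x + t k)) //; exact: addIr.
have -> : (fun n => Rdiv (INR (count (fun x => (x - g) \in map (fun x => x + t n) (Bx m n))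
    (map (fun x => x + t n) (Bx m n)))) (INR (size (map (fun x => x + t n) (Bx m n)))))
  = (fun k => Rdiv (INR (count (fun x => (x - g) \in Bx m k) (Bx m k))) (INR (size (Bx m k)))).
  by apply: functional_extensionality => k; rewrite e size_map.
apply: (@ratio_conv _ (fun k => size (Bx m k)) (\sum_(i <- enum 'I_m) 2 * absz (g ord0 i))%N).
- by move=> k; rewrite size_Bx expn_gt0.
- by move=> k; apply: count_size.
- by move=> k; apply: box_count.
Qed.

Lemma ratio_le1 (c s : nat) : (0 < s)%N -> (c <= s)%N -> Rle (Rdiv (INR c) (INR s)) (IZR 1).
Proof.
move=> hs hc; have hs' : Rlt (IZR 0) (INR s) by apply: (INR_ltn hs).
have hc' := INR_leq hc.
apply: (Rmult_le_reg_r (INR s)) => //; rewrite /Rdiv Rmult_assoc Rinv_l; lra.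
Qed.

Lemma limsup_le1 m (A : Zm m -> Prop) F l : Folner F -> is_limsup (density_ratio A F) l -> Rle l (IZR 1).
Proof.
move=> [hF _] [_ h2]; apply: Rnot_lt_le => hl.
have [n [_ hn]] := h2 (Rminus l (IZR 1)) ltac:(lra) 0%N.
have : Rle (density_ratio A F n) (IZR 1).
  by apply: ratio_le1; [case: (hF n) | apply: count_size].
lra.
Qed.

Lemma e_to_f m (Lam : nat -> Zm m -> Prop) : (1 <= m)%N -> (forall i, proper_lattice (Lam i)) ->
  Ep Lam -> upper_banach_density (MBd Lam) (IZR 1).
Proof.
move=> hm hLam hE.
pose P k := fun t => forall w, w \in Bx m k -> MBd Lam (t + w).
pose t k := zpick (P k).
have ht : forall k, P k (t k) by move=> k; apply: zpickP; apply: e_to_W.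
pose F k := map (fun x => x + t k) (Bx m k).
have hF : Folner F := Folner_box t hm.
have dr : forall k, density_ratio (MBd Lam) F k = IZR 1.
  move=> k; rewrite /density_ratio.
  have -> : count (fun x => pbool (MBd Lam x)) (F k) = size (F k).
    apply/eqP; rewrite -all_count; apply/allP => x /mapP [w hw ->]; apply/pboolE.
    by rewrite addrC; apply: ht.
  have : Rlt (IZR 0) (INR (size (F k))) by apply: (@INR_ltn 0); case: hF => /(_ k) [] .
  by move=> h; rewrite /Rdiv Rinv_r //; lra.
split.
  by move=> l [F' [hF' hl]]; apply: limsup_le1 hl.
move=> b hb; apply: hb; exists F; split => //; split.
  by move=> eps heps; exists 0%N => n _; rewrite dr; lra.
by move=> eps heps N; exists N; split => //; rewrite dr; lra.
Qed.

Lemma count_le_or (T : Type) (a b c : pred T) s : (forall x, a x -> b x || c x) ->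
  (count a s <= count b s + count c s)%N.
Proof.
move=> h; elim: s => //= x s IH.
have : (a x <= b x + c x)%N by case ha: (a x) => //; have := h x ha; case: (b x); case: (c x).
move=> hx; rewrite addnACA; exact: leq_add.
Qed.

Lemma sum_cst (T : Type) (s : seq T) c : (\sum_(r <- s) c = size s * c)%N.
Proof. by rewrite big_const_seq count_predT iter_addn_0 mulnC. Qed.

Lemma comb m (F s : seq (Zm m)) (Pb MBb : pred (Zm m)) :
  uniq F -> (0 < size s)%N ->
  (forall x, exists2 r, r \in s & Pb (x - r)%R) ->
  (forall x, Pb x -> MBb x -> False) ->
  (forall r, r \in s -> (2 * size s * (size F - count (fun x => (x - r)%R \in F) F) < size F)%N) ->
  (2 * size s * count MBb F + size F <= 2 * size s * size F)%N.
Proof.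
move=> hu hN hcov hdis hc.
set N := size s; set S := size F; set p := count Pb F.
have ha : (S <= \sum_(r <- s) count (fun x => Pb (x - r)%R) F)%N.
  rewrite /S -(count_predT F); apply: count_cover => x _ _.
  by case: (hcov x) => r rs hr; exists r.
have hb : forall r, r \in s -> (count (fun x => Pb (x - r)%R) F <= p + (S - count (fun x => (x - r)%R \in F) F))%N.
  move=> r _.
  apply: leq_trans (count_le_or (b := fun x => ((x - r)%R \in F) && Pb (x - r)%R)
                                (c := fun x => (x - r)%R \notin F) F _) _.
    by move=> x ->; case: (_ \in F).
  apply: leq_add.
    rewrite -size_filter -(size_map (fun x => x - r)) /p -size_filter.
    apply: uniq_leq_size.
      by rewrite map_inj_uniq ?filter_uniq //; exact: addIr.
    move=> y /mapP [x]; rewrite mem_filter => /andP [/andP [h1 h2] _] ->.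
    by rewrite mem_filter h2 h1.
  rewrite /S -(count_predC (fun x => (x - r)%R \in F) F) addKn.
  by apply: eq_leq; apply: eq_count.
set D := (\sum_(r <- s) (S - count (fun x => (x - r)%R \in F) F))%N.
have hsum : (S <= N * p + D)%N.
  apply: leq_trans ha _.
  rewrite /D /N -sum_cst -big_split /=.
  by rewrite !big_seq; apply: leq_sum => r hr; apply: hb.
have hD : (2 * N * D <= N * S)%N.
  rewrite /D big_distrr /= /N -sum_cst.
  by rewrite !big_seq; apply: leq_sum => r hr; apply: ltnW; apply: hc.
have hdis' : (count MBb F + p <= S)%N.
  rewrite /p -count_predUI.
  have -> : count (predI MBb Pb) F = 0%N.
    by apply/eqP; rewrite -leqn0 leqNgt -has_count; apply/hasP => -[x _ /andP [h1 h2]]; apply: (hdis x).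
  by rewrite addn0 count_size.
have h1 : (N * S <= 2 * N * (N * p))%N.
  have := leq_mul (leqnn (2 * N)) hsum; rewrite mulnDr; nia.
have h2 : (S <= 2 * N * p)%N.
  by move: h1; rewrite [X in (_ <= X)%N]mulnCA leq_pmul2l.
nia.
Qed.

Lemma thresh m (F : nat -> seq (Zm m)) (N : nat) : (0 < N)%N -> Folner F ->
  forall s : seq (Zm m), exists K0, forall k, (K0 <= k)%N -> forall r, r \in s ->
    (2 * N * (size (F k) - count (fun x => (x - r)%R \in F k) (F k)) < size (F k))%N.
Proof.
move=> hN [hF1 hF2]; elim=> [|r s [K0 hK0]]; first by exists 0%N.
have heps : Rgt (Rinv (Rmult (IZR 2) (INR N))) (IZR 0).
  have : Rlt (IZR 0) (INR N) by apply: (@INR_ltn 0).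
  move=> h; apply: Rinv_0_lt_compat; lra.
have [K1 hK1] := hF2 r _ heps.
exists (maxn K0 K1) => k hk r'; rewrite inE => /orP[/eqP->|hr'].
  apply: cv_to_nat => //; first by case: (hF1 k).
  - exact: count_size.
  - by apply: hK1; apply/leP; apply: leq_trans hk; apply: leq_maxr.
by apply: hK0 => //; apply: leq_trans hk; apply: leq_maxl.
Qed.

Lemma f_to_e m (Lam : nat -> Zm m -> Prop) :
  upper_banach_density (MBd Lam) (IZR 1) -> Ep Lam.
Proof.
move=> [hub hlst] n L hL hF.
have hL' := hL; case: hL' => hLs [s hs].
have hN : (0 < size s)%N by case: (hs 0) => r; case: (s).
pose b := Rminus (IZR 1) (Rinv (Rmult (IZR 2) (INR (size s)))).
have key : is_upper_bound (fun l => exists F, Folner F /\ is_limsup (density_ratio (MBd Lam) F) l) b.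
  move=> l [F [hFol hl]].
  have [K0 hK0] := thresh hN hFol s.
  apply: Rnot_lt_le => hlb.
  have [k [hk hk2]] := (proj2 hl) (Rminus l b) ltac:(lra) K0.
  have : Rle (density_ratio (MBd Lam) F k) b.
    apply: dens_bound => //; first by case: (proj1 hFol k).
    apply: (comb (Pb := fun x => pbool (L (x - n)))).
    - by case: (proj1 hFol k).
    - exact: hN.
    - move=> x; case: (hs (x - n)) => r rs hr; exists r => //; apply/pboolE.
      by have -> : x - r - n = x - n - r by rewrite addrAC.
    - move=> x /pboolE hx /pboolE hM; apply: (hF _ hx).
      by rewrite addrC subrK.
    - by move=> r rs; apply: hK0.
  lra.
have := hlst b key.
have : Rlt (IZR 0) (INR (size s)) by apply: (@INR_ltn 0).
move=> h1 h2.
have : Rlt (IZR 0) (Rinv (Rmult (IZR 2) (INR (size s)))) by apply: Rinv_0_lt_compat; lra.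
rewrite /b in h2; lra.
Qed.

Unset Implicit Arguments.

Theorem theorem5p3 (m : nat) (Lam : nat -> 'rV[int]_m -> Prop)
  (hm : (1 <= m)%N)
  (hLam : forall i, proper_lattice (Lam i))
  (hdist : forall i j, i <> j -> ~ (forall x, Lam i x <-> Lam j x)) :
  let MB : 'rV[int]_m -> Prop := fun x => exists i, Lam i x in
  let FB : 'rV[int]_m -> Prop := fun x => ~ MB x in
  let eta : 'rV[int]_m -> bool := fun g => pbool (FB g) in
  let Xeta := orbit_closure eta in
  let a := proximal Xeta in
  let b := Xeta (fun _ => false) in
  let c := forall (k : nat) (L : 'I_k -> 'rV[int]_m -> Prop),
             (1 <= k)%N -> (forall j, is_lattice (L j)) ->
             (exists x, forall j, ~ L j x) ->
             ~ (forall x, MB x -> exists j, L j x) in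
  let d := exists phi : nat -> nat, injective phi /\
             forall i j, i <> j -> coprime_lat (Lam (phi i)) (Lam (phi j)) in
  let e := forall (n : 'rV[int]_m) (L : 'rV[int]_m -> Prop),
             is_lattice L -> ~ (forall l, L l -> FB (n + l)) in
  let f := upper_banach_density MB (IZR 1) in
  (d -> a) /\ (a <-> b) /\ (a <-> c) /\ (a <-> e) /\ (a <-> f).
Proof.
move=> MB FB eta Xeta a b c d e f.
have ha : a <-> Ep Lam := conj (@a_to_e m Lam hLam) (@e_to_a m Lam hm hLam).
have hb : b <-> Ep Lam := conj (@b_to_e m Lam) (@e_to_b m Lam hLam).
have hc : c <-> Ep Lam := conj (@c_to_e m Lam hLam) (@e_to_c m Lam).
have hd : d -> Ep Lam := @d_to_e m Lam hLam.
have he : e <-> Ep Lam by [].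
have hf : f <-> Ep Lam := conj (@f_to_e m Lam) (@e_to_f m Lam hm hLam).
tauto.
Qed.
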